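(* Let $\Omega\subseteq\mathbb{R}^n$ be bounded and measurable, $Y$ a Hilbert space, $S:L^2(\Omega)\to Y$ linear and continuous, $z\in Y$, $u_a,u_b\in L^\infty(\Omega)$, $u_a\le u_b$, $U_{\mathrm{ad}}=\{u\in L^2(\Omega):u_a\le u\le u_b\text{ a.e.}\}$. Let $u^\dagger$ be a solution of $\min_{u\in U_{\mathrm{ad}}}\frac12\|Su-z\|_Y^2$ such that there exists $w\in Y$ with $u^\dagger=P_{U_{\mathrm{ad}}}(S^\ast w)$. Let $(\varepsilon_k)_k$ be positive reals with $\sum_{i=1}^\infty R_i<\infty$, where $R_i:=\frac{\varepsilon_i}{\alpha_i}+\frac{\varepsilon_i^2}{\alpha_i^2}+\frac{\gamma_{i-1}\varepsilon_i}{\alpha_i}+\frac{\varepsilon_i^2}{\alpha_i}$. Assume $S_h=S$ and let $(u_k^{\mathrm{in}})_k$ be generated by the inexact Bregman algorithm in the context. Then $u_k^{\mathrm{in}}\to u^\dagger$ in $L^2(\Omega)$.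
   Context: $\|\cdot\|,(\cdot,\cdot)$: $L^2(\Omega)$ norm and inner product; $P_{U_{\mathrm{ad}}}$: $L^2$-projection onto $U_{\mathrm{ad}}$. $(\alpha_k)_k$ is a bounded sequence of positive reals, $\gamma_k:=\sum_{j=1}^k\alpha_j^{-1}$, $\gamma_0=0$. Define $\mathcal B(\alpha,\lambda,u):=(1+\frac1\alpha)\|u-P_{U_{\mathrm{ad}}}(\frac1\alpha S_h^\ast(z-S_hu)+\lambda)\|$ (here with $S_h=S$). Inexact Bregman algorithm: $u_0^{\mathrm{in}}=P_{U_{\mathrm{ad}}}(0)$, $\lambda_0^{\mathrm{in}}=0$; for $k=1,2,\dots$ find $u_k^{\mathrm{in}}\in U_{\mathrm{ad}}$ with $\mathcal B(\alpha_k,\lambda_{k-1}^{\mathrm{in}},u_k^{\mathrm{in}})\le\varepsilon_k$, then set $\lambda_k^{\mathrm{in}}=\sum_{i=1}^k\frac1{\alpha_i}S_h^\ast(z-S_hu_i^{\mathrm{in}})$. *)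

(* Defs.v *)
From HB Require Import structures.
From mathcomp Require Import all_boot all_order all_algebra.
From mathcomp Require Import all_classical all_reals all_analysis.
Set Implicit Arguments. Unset Strict Implicit. Unset Printing Implicit Defensive.
Import Order.TTheory GRing.Theory Num.Theory.
Import numFieldNormedType.Exports.
Local Open Scope classical_set_scope.
Local Open Scope ring_scope.

Section L2defs.
Context {d : measure_display} {T : measurableType d} {R : realType}.
Variable mu : {measure set T -> \bar R}.

Definition inL2 (f : T -> R) : Prop :=
  measurable_fun setT f /\ ('N[mu]_(2%:E)[EFin \o f] < +oo)%E.

Definition L2norm (f : T -> R) : R := fine ('N[mu]_(2%:E)[EFin \o f]).

Definition L2inner (f g : T -> R) : R := fine (\int[mu]_x (f x * g x)%:E).

Definition inLinfty (f : T -> R) : Prop :=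
  measurable_fun setT f /\ exists M : R, {ae mu, forall x, `|f x| <= M}.

Definition Uad (ua ub : T -> R) : set (T -> R) :=
  [set u | inL2 u /\ {ae mu, forall x, ua x <= u x <= ub x}].

Definition is_L2proj (U : set (T -> R)) (v p : T -> R) : Prop :=
  U p /\ forall q, U q -> L2norm (fun x => v x - p x) <= L2norm (fun x => v x - q x).

End L2defs.

(* A real Hilbert space: a complete normed space whose norm comes from an
   inner product. *)
Definition is_inner_product {R : realType} {Y : normedModType R}
  (ip : Y -> Y -> R) : Prop :=
  (forall x y, ip x y = ip y x) /\
  (forall a x y z, ip (a *: x + y) z = a * ip x z + ip y z) /\
  (forall x, ip x x = `|x| ^+ 2).

Definition L2_bounded_linear {d} {T : measurableType d} {R : realType}
  (mu : {measure set T -> \bar R}) {Y : normedModType R} (S : (T -> R) -> Y) : Prop :=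
  (forall a f g, inL2 mu f -> inL2 mu g ->
     S (fun x => a * f x + g x) = a *: S f + S g) /\
  (exists C : R, forall f, inL2 mu f -> `|S f| <= C * L2norm mu f).

Definition is_adjoint {d} {T : measurableType d} {R : realType}
  (mu : {measure set T -> \bar R}) {Y : normedModType R} (ip : Y -> Y -> R)
  (S : (T -> R) -> Y) (Sadj : Y -> (T -> R)) : Prop :=
  forall w, inL2 mu (Sadj w) /\
    forall u, inL2 mu u -> L2inner mu (Sadj w) u = ip w (S u).

Definition gammaseq {R : realType} (alpha : nat -> R) (k : nat) : R :=
  \sum_(1 <= j < k.+1) (alpha j)^-1.

Definition Rterm {R : realType} (alpha eps : nat -> R) (i : nat) : R :=
  eps i / alpha i + (eps i) ^+ 2 / (alpha i) ^+ 2
  + gammaseq alpha i.-1 * eps i / alpha i + (eps i) ^+ 2 / alpha i.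

Definition lambdaseq {d} {T : measurableType d} {R : realType} {Y : normedModType R}
  (S : (T -> R) -> Y) (Sadj : Y -> (T -> R)) (z : Y) (alpha : nat -> R)
  (u : nat -> (T -> R)) (k : nat) : T -> R :=
  fun x => \sum_(1 <= i < k.+1) (alpha i)^-1 * Sadj (z - S (u i)) x.

Definition B_le {d} {T : measurableType d} {R : realType}
  (mu : {measure set T -> \bar R}) {Y : normedModType R}
  (U : set (T -> R)) (S : (T -> R) -> Y) (Sadj : Y -> (T -> R)) (z : Y)
  (alpha : R) (lam u : T -> R) (eps : R) : Prop :=
  exists p, is_L2proj mu U (fun x => alpha^-1 * Sadj (z - S u) x + lam x) p /\
    (1 + alpha^-1) * L2norm mu (fun x => u x - p x) <= eps.

(* Main.v *)
Require Import Defs.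
From HB Require Import structures.
From mathcomp Require Import all_boot all_order all_algebra.
From mathcomp Require Import all_classical all_reals all_analysis.
From mathcomp Require Import ring lra.
Import Order.TTheory GRing.Theory Num.Theory.
Import numFieldNormedType.Exports.
Local Open Scope classical_set_scope.
Local Open Scope ring_scope.
Lemma real_le0 {R : realType} (x c : R) : 0 <= c ->
  (forall t, 0 < t -> t <= 1 -> x <= t * c) -> x <= 0.
Proof.
move=> c0 H; rewrite leNgt; apply/negP => x0.
have xc : 0 < x + c by rewrite ltr_wpDr.
have := H (x / (x + c)).
rewrite divr_gt0 // ler_pdivrMr // mul1r lerDl c0 => /(_ isT isT).
rewrite mulrAC ler_pdivlMr // => h.
have : x * x <= 0 by rewrite -(lerD2r (x * c)) add0r -mulrDr.
by rewrite leNgt mulr_gt0.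
Qed.

Section L2.
Context {d : measure_display} {T : measurableType d} {R : realType}.
Variable mu : {measure set T -> \bar R}.

Lemma inL2P (f : T -> R) : inL2 mu f <-> f \in Lfun mu 2%:E.
Proof.
split.
- by case=> mf nf; apply/andP; split; rewrite inE.
- by move=> /andP[]; rewrite !inE /= => mf nf; split.
Qed.

Lemma inL2_lin (a : R) {f g : T -> R} : inL2 mu f -> inL2 mu g ->
  inL2 mu (fun x => a * f x + g x).
Proof.
move=> /inL2P hf /inL2P hg; apply/inL2P.
have [_ H] := Lfun_submod_closed mu (lee1n 2).
exact: (H a f g hf hg).
Qed.

Lemma inL2_mul_int {f g : T -> R} : inL2 mu f -> inL2 mu g ->
  mu.-integrable setT (fun x => (f x * g x)%:E).
Proof.
move=> /inL2P hf /inL2P hg.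
exact/Lfun1_integrable/Lfun2_mul_Lfun1.
Qed.

Lemma L2inner_sym f g : L2inner mu f g = L2inner mu g f.
Proof. by rewrite /L2inner; under eq_integral do rewrite mulrC. Qed.

Lemma L2inner_linl (a : R) (f g h : T -> R) : inL2 mu f -> inL2 mu g -> inL2 mu h ->
  L2inner mu (fun x => a * f x + g x) h = a * L2inner mu f h + L2inner mu g h.
Proof.
move=> hf hg hh; rewrite /L2inner.
have i1 := inL2_mul_int hf hh; have i2 := inL2_mul_int hg hh.
have i1' : mu.-integrable setT (fun x => (a * (f x * h x))%:E).
  under eq_fun do rewrite EFinM. exact: integrableZl.
rewrite (_ : (fun x => _) = (fun x => (a * (f x * h x))%:E + (g x * h x)%:E)%E); last first.
  by apply/funext => x; rewrite mulrDl mulrA EFinD.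
rewrite integralD //.
under eq_integral do rewrite EFinM.
rewrite integralZl // fineD ?fin_numM ?integrable_fin_num //.
by rewrite fineM ?integrable_fin_num.
Qed.

Lemma L2norm_ge0 f : 0 <= L2norm mu f.
Proof. by rewrite /L2norm fine_ge0 // Lnorm_ge0. Qed.

Lemma L2norm_sqr f : inL2 mu f -> L2norm mu f ^+ 2 = L2inner mu f f.
Proof.
move=> [mf nf]; rewrite /L2norm /L2inner.
have fN : ('N[mu]_(2%:E)[EFin \o f])%E \is a fin_num.
  by rewrite ge0_fin_numE // Lnorm_ge0.
have h2 : (2:R) != 0 by rewrite pnatr_eq0.
have := poweR_Lnorm mu (EFin \o f) h2.
rewrite -(fineK fN) poweR_EFin powR_mulrn ?fine_ge0 ?Lnorm_ge0 // => E.
apply: EFin_inj; rewrite E.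
have fi : (\int[mu]_x (f x * f x)%:E)%E \is a fin_num.
  by apply: integrable_fin_num => //; apply: inL2_mul_int; split.
rewrite fineK //; apply: eq_integral => x _ /=.
by rewrite powR_mulrn // real_normK ?num_real // expr2.
Qed.

Lemma L2inner_ge0 f : inL2 mu f -> 0 <= L2inner mu f f.
Proof. by move=> hf; rewrite -L2norm_sqr // sqr_ge0. Qed.


Lemma L2inner_linr (a : R) (f g h : T -> R) : inL2 mu f -> inL2 mu g -> inL2 mu h ->
  L2inner mu h (fun x => a * f x + g x) = a * L2inner mu h f + L2inner mu h g.
Proof.
by move=> *; rewrite L2inner_sym L2inner_linl // (L2inner_sym f) (L2inner_sym g).
Qed.

Lemma inL2_sub {f g : T -> R} : inL2 mu f -> inL2 mu g -> inL2 mu (fun x => f x - g x).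
Proof.
move=> hf hg; have := inL2_lin (-1) hg hf.
by rewrite (_ : (fun x => _) = (fun x => f x - g x)) //; apply/funext => x; rewrite mulN1r addrC.
Qed.

Lemma L2inner_subl (f g h : T -> R) : inL2 mu f -> inL2 mu g -> inL2 mu h ->
  L2inner mu (fun x => f x - g x) h = L2inner mu f h - L2inner mu g h.
Proof.
move=> hf hg hh.
rewrite (_ : (fun x => _) = (fun x => (-1) * g x + f x)); last first.
  by apply/funext => x; rewrite mulN1r addrC.
by rewrite L2inner_linl // mulN1r addrC.
Qed.

Lemma L2inner_subr (f g h : T -> R) : inL2 mu f -> inL2 mu g -> inL2 mu h ->
  L2inner mu h (fun x => f x - g x) = L2inner mu h f - L2inner mu h g.
Proof.
by move=> *; rewrite L2inner_sym L2inner_subl // (L2inner_sym f) (L2inner_sym g).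
Qed.

Lemma L2inner_scalel (a : R) (f h : T -> R) : inL2 mu f -> inL2 mu h ->
  L2inner mu (fun x => a * f x) h = a * L2inner mu f h.
Proof.
move=> hf hh; rewrite /L2inner.
under eq_integral do rewrite -mulrA EFinM.
rewrite integralZl ?fineM ?integrable_fin_num //; exact: inL2_mul_int.
Qed.

Lemma inL2_scale (a : R) {f : T -> R} : inL2 mu f -> inL2 mu (fun x => a * f x).
Proof.
move=> hf; have h0 : inL2 mu (fun _ => 0 : R).
  by apply/inL2P; have [h _] := Lfun_submod_closed mu (lee1n 2); exact: h.
have := inL2_lin a hf h0.
by rewrite (_ : (fun x => _) = (fun x => a * f x)) //; apply/funext => x; rewrite addr0.
Qed.

Lemma Uad_conv {ua ub p q : T -> R} {t : R} : 0 <= t -> t <= 1 ->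
  Uad mu ua ub p -> Uad mu ua ub q -> Uad mu ua ub (fun x => t * (q x - p x) + p x).
Proof.
move=> t0 t1 [hp ap] [hq aq]; split; first exact: inL2_lin (inL2_sub hq hp) hp.
apply: filterS2 ap aq => x /andP[p1 p2] /andP[q1 q2]; apply/andP; split; nra.
Qed.

Lemma L2norm_sq_expand {a b : T -> R} (t : R) : inL2 mu a -> inL2 mu b ->
  L2norm mu (fun x => a x - t * b x) ^+ 2 =
  L2norm mu a ^+ 2 - 2 * t * L2inner mu a b + t ^+ 2 * L2norm mu b ^+ 2.
Proof.
move=> ha hb; have hb' := inL2_scale t hb.
rewrite !L2norm_sqr //; last exact: inL2_sub.
rewrite L2inner_subl ?L2inner_subr ?L2inner_scalel ?(L2inner_sym _ (fun x => t * b x)) ?L2inner_scalel //; try exact: inL2_sub.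
rewrite (L2inner_sym b a); ring.
Qed.

Lemma proj_VI {ua ub v p q : T -> R} : inL2 mu v ->
  is_L2proj mu (Uad mu ua ub) v p -> Uad mu ua ub q ->
  L2inner mu (fun x => v x - p x) (fun x => q x - p x) <= 0.
Proof.
move=> hv [Up Hp] Uq.
have hp : inL2 mu p by case: Up.
have hq : inL2 mu q by case: Uq.
have ha := inL2_sub hv hp; have hb := inL2_sub hq hp.
apply: (@real_le0 _ _ (L2norm mu (fun x => q x - p x) ^+ 2 / 2)).
  by rewrite divr_ge0 // sqr_ge0.
move=> t t0 t1.
have := Hp _ (Uad_conv (ltW t0) t1 Up Uq).
rewrite (_ : (fun x => v x - (t * (q x - p x) + p x)) =
   (fun x => (v x - p x) - t * (q x - p x))); last first.
  by apply/funext => x; ring.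
move=> H.
have H2 : L2norm mu (fun x => v x - p x) ^+ 2 <=
   L2norm mu (fun x => (v x - p x) - t * (q x - p x)) ^+ 2.
  by rewrite ler_sqr ?nnegrE ?L2norm_ge0.
rewrite (L2norm_sq_expand t ha hb) in H2.
set A := L2inner _ _ _ in H2 *; set N := L2norm _ (fun x => q x - p x) in H2 *.
nra.
Qed.

End L2.

Section IP.
Context {R : realType} {Y : normedModType R} (ip : Y -> Y -> R).
Hypothesis hip : is_inner_product ip.

Lemma ip_sym x y : ip x y = ip y x.
Proof. by case: hip. Qed.

Lemma ip_norm x : ip x x = `|x| ^+ 2.
Proof. by case: hip => _ []. Qed.

Lemma ip_lin a x y z : ip (a *: x + y) z = a * ip x z + ip y z.
Proof. by case: hip => _ []. Qed.

Lemma ip0l z : ip 0 z = 0.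
Proof.
have := ip_lin 1 0 0 z; rewrite scaler0 addr0 mul1r => h; lra.
Qed.

Lemma ip_addl x y z : ip (x + y) z = ip x z + ip y z.
Proof. by rewrite -[x in LHS]scale1r ip_lin mul1r. Qed.

Lemma ip_scalel a x z : ip (a *: x) z = a * ip x z.
Proof. by rewrite -[a *: x]addr0 ip_lin ip0l addr0. Qed.

Lemma ip_oppl x z : ip (- x) z = - ip x z.
Proof. by rewrite -scaleN1r ip_scalel mulN1r. Qed.

Lemma ip_subl x y z : ip (x - y) z = ip x z - ip y z.
Proof. by rewrite ip_addl ip_oppl. Qed.

Lemma ip_addr x y z : ip z (x + y) = ip z x + ip z y.
Proof. by rewrite ip_sym ip_addl !(ip_sym z). Qed.

Lemma ip_scaler a x z : ip z (a *: x) = a * ip z x.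
Proof. by rewrite ip_sym ip_scalel ip_sym. Qed.

Lemma ip_oppr x z : ip z (- x) = - ip z x.
Proof. by rewrite ip_sym ip_oppl ip_sym. Qed.

Lemma ip_subr x y z : ip z (x - y) = ip z x - ip z y.
Proof. by rewrite ip_addr ip_oppr. Qed.

Lemma ip_suml (I : Type) (r : seq I) (P : pred I) (F : I -> Y) z :
  ip (\sum_(i <- r | P i) F i) z = \sum_(i <- r | P i) ip (F i) z.
Proof. exact: (big_morph (fun x => ip x z) (fun x y => ip_addl x y z) (ip0l z)). Qed.

Lemma ip_CS x y : ip x y <= `|x| * `|y|.
Proof.
have h := ip_norm (x + y).
rewrite ip_addl !ip_addr !ip_norm (ip_sym y x) in h.
have t := ler_normD x y.
have n0 : 0 <= `|x + y| by [].
have : `|x + y| ^+ 2 <= (`|x| + `|y|) ^+ 2 by rewrite ler_sqr ?nnegrE ?addr_ge0.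
rewrite -h; nra.
Qed.

Lemma norm_sq_addZ (e D : Y) (t : R) :
  `|e + t *: D| ^+ 2 = `|e| ^+ 2 + 2 * t * ip e D + t ^+ 2 * `|D| ^+ 2.
Proof.
rewrite -!ip_norm ip_addl !ip_addr !ip_scalel !ip_scaler (ip_sym D e); ring.
Qed.

End IP.

Theorem corollary4p2 (d : measure_display) (T : measurableType d) (R : realType)
  (mu : {finite_measure set T -> \bar R})
  (Y : completeNormedModType R) (ip : Y -> Y -> R)
  (S : (T -> R) -> Y) (Sadj : Y -> (T -> R)) (z : Y)
  (ua ub : T -> R) (udag : T -> R)
  (alpha eps : nat -> R) (uin : nat -> (T -> R)) :
  is_inner_product ip ->
  L2_bounded_linear mu S ->
  is_adjoint mu ip S Sadj ->
  inLinfty mu ua -> inLinfty mu ub -> {ae mu, forall x, ua x <= ub x} ->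
  (* u^dagger solves min_{u in U_ad} 1/2 ||S u - z||^2 *)
  Uad mu ua ub udag ->
  (forall u, Uad mu ua ub u ->
     2^-1 * `|S udag - z| ^+ 2 <= 2^-1 * `|S u - z| ^+ 2) ->
  (* source condition *)
  (exists w : Y, is_L2proj mu (Uad mu ua ub) (Sadj w) udag) ->
  (* (alpha_k)_{k>=1} bounded positive, (eps_k)_{k>=1} positive *)
  (forall k, (1 <= k)%N -> 0 < alpha k) ->
  (exists M : R, forall k, (1 <= k)%N -> alpha k <= M) ->
  (forall k, (1 <= k)%N -> 0 < eps k) ->
  cvg ([sequence \sum_(1 <= i < N.+1) Rterm alpha eps i]_N @ \oo) ->
  (* inexact Bregman iteration (with S_h = S) *)
  is_L2proj mu (Uad mu ua ub) (fun _ => 0) (uin 0%N) ->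
  (forall k, (1 <= k)%N ->
     Uad mu ua ub (uin k) /\
     B_le mu (Uad mu ua ub) S Sadj z (alpha k)
          (lambdaseq S Sadj z alpha uin k.-1) (uin k) (eps k)) ->
  (fun k => L2norm mu (fun x => uin k x - udag x)) @ \oo --> 0.
Proof.
move=> hip hS hadj hua hub huab Udag Hopt [w Hw] halpha [M HM] heps Hcvg H0 Hk.
have [hSlin [C HC]] := hS.
have ipsubl := @ip_subl _ _ ip hip; have ipsubr := @ip_subr _ _ ip hip.
have ipaddl := @ip_addl _ _ ip hip; have ipaddr := @ip_addr _ _ ip hip.
have ipscalel := @ip_scalel _ _ ip hip; have ipscaler := @ip_scaler _ _ ip hip.
have ipoppl := @ip_oppl _ _ ip hip; have ipoppr := @ip_oppr _ _ ip hip.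
have ipsuml := @ip_suml _ _ ip hip.
set Cb := `|C|.
have HCb : forall f, inL2 mu f -> `|S f| <= Cb * L2norm mu f.
  move=> f hf; apply: (le_trans (HC f hf)); apply: ler_wpM2r; [exact: L2norm_ge0 | exact: ler_norm].
have hdag : inL2 mu udag by case: Udag.
have h0 : inL2 mu (fun _ : T => 0 : R).
  by apply/inL2P; have [h _] := Lfun_submod_closed mu (lee1n 2); exact: h.
have Ssub : forall f g, inL2 mu f -> inL2 mu g -> S (fun x => f x - g x) = S f - S g.
  move=> f g hf hg.
  rewrite (_ : (fun x => f x - g x) = (fun x => (-1) * g x + f x)); last first.
    by apply/funext => x; rewrite mulN1r addrC.
  by rewrite hSlin // scaleN1r addrC.
have huk : forall k, (1 <= k)%N -> inL2 mu (uin k) by move=> k /Hk [[]].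
pose lam k := lambdaseq S Sadj z alpha uin k.
have lam0 : lam 0%N = fun _ => 0.
  by apply/funext => x; rewrite /lam /lambdaseq big_geq.
have lam_succ : forall k, lam k.+1 =
    (fun x => (alpha k.+1)^-1 * Sadj (z - S (uin k.+1)) x + lam k x).
  by move=> k; apply/funext => x; rewrite /lam /lambdaseq big_nat_recr //= addrC.
have lamL2 : forall k, inL2 mu (lam k).
  elim=> [|k IH]; first by rewrite lam0.
  rewrite lam_succ; apply: inL2_lin => //; exact: (hadj _).1.
have lam_inner : forall k h, inL2 mu h ->
    L2inner mu (lam k) h = \sum_(1 <= i < k.+1) (alpha i)^-1 * ip (z - S (uin i)) (S h).
  move=> k h hh; elim: k => [|k IH].
    rewrite big_geq // lam0 /L2inner.
    by under eq_integral do rewrite mul0r; rewrite integral0.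
  rewrite lam_succ (L2inner_linl mu _ _ _ _ ((hadj _).1) (lamL2 k) hh).
  by rewrite big_nat_recr //= IH ((hadj _).2 _ hh) addrC.
have Hex : forall k, exists p, (1 <= k)%N ->
   is_L2proj mu (Uad mu ua ub) (lam k) p /\ L2norm mu (fun x => uin k x - p x) <= eps k.
  case=> [|k]; first by exists udag.
  have [_ [p [Pp Hp]]] := Hk k.+1 isT.
  exists p => _; split; first by rewrite lam_succ; exact: Pp.
  have a0 := halpha k.+1 isT.
  have L0 := L2norm_ge0 mu (fun x => uin k.+1 x - p x).
  apply: le_trans Hp; rewrite -[X in X <= _]mul1r; apply: ler_wpM2r => //.
  by rewrite lerDl invr_ge0 ltW.
have [P HP] := choice Hex.
have hP : forall k, (1 <= k)%N -> inL2 mu (P k) by move=> k hk; case: (HP k hk) => [[[]]].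
have hw : inL2 mu (Sadj w) := (hadj w).1.
have Opt : forall q, Uad mu ua ub q -> ip (z - S udag) (S q - S udag) <= 0.
  move=> q Uq; have hq : inL2 mu q := Uq.1.
  apply: (@real_le0 _ _ (`|S q - S udag| ^+ 2 / 2)); first by rewrite divr_ge0 // sqr_ge0.
  move=> t t0 t1.
  have := Hopt _ (Uad_conv mu (ltW t0) t1 Udag Uq).
  rewrite (hSlin t (fun x => q x - udag x) udag) ?Ssub //; last exact: inL2_sub.
  rewrite (_ : t *: (S q - S udag) + S udag - z = (S udag - z) + t *: (S q - S udag)); last first.
    by rewrite -addrA addrC.
  rewrite (@norm_sq_addZ _ _ ip hip) => h.
  rewrite (_ : ip (z - S udag) (S q - S udag) = - ip (S udag - z) (S q - S udag)); last first.
    by rewrite -ipoppl opprB.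
  nra.
pose eta k : Y := \sum_(1 <= i < k.+1) (alpha i)^-1 *: (S udag - S (uin i)) - w.
have eta_ip : forall k v, ip (eta k) v =
    \sum_(1 <= i < k.+1) (alpha i)^-1 * ip (S udag - S (uin i)) v - ip w v.
  move=> k v; rewrite /eta ipsubl ipsuml; congr (_ - _); apply: eq_bigr => i _.
  by rewrite ipscalel.
have F2 : forall k, (1 <= k)%N ->
    L2norm mu (fun x => P k x - udag x) ^+ 2 <= ip (eta k) (S (P k) - S udag).
  move=> k hk.
  have [[Upk Hpk] _] := HP k hk.
  have hp := hP k hk.
  have hd := inL2_sub mu hp hdag.
  have hd' := inL2_sub mu hdag hp.
  have hl := lamL2 k.
  have VI1 := proj_VI mu hl (HP k hk).1 Udag.
  have VI2 := proj_VI mu hw Hw Upk.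
  have VI3 := Opt (P k) Upk.
  rewrite (L2inner_subl mu _ _ _ hl hp hd') (L2inner_subr mu _ _ _ hdag hp hl)
     (L2inner_subr mu _ _ _ hdag hp hp) in VI1.
  rewrite (L2inner_subl mu _ _ _ hw hdag hd) (L2inner_subr mu _ _ _ hp hdag hw)
     (L2inner_subr mu _ _ _ hp hdag hdag) in VI2.
  have E1 : L2inner mu (lam k) (P k) - L2inner mu (lam k) udag =
     (\sum_(1 <= i < k.+1) (alpha i)^-1) * ip (z - S udag) (S (P k) - S udag)
     + \sum_(1 <= i < k.+1) (alpha i)^-1 * ip (S udag - S (uin i)) (S (P k) - S udag).
    rewrite -(L2inner_subr mu _ _ _ hp hdag hl) lam_inner // Ssub // mulr_suml -big_split /=.
    apply: eq_bigr => i _; rewrite -mulrDr; congr (_ * _).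
    by rewrite -ipaddl addrA subrK.
  have E2 : L2inner mu (Sadj w) (P k) - L2inner mu (Sadj w) udag = ip w (S (P k) - S udag).
    by rewrite -(L2inner_subr mu _ _ _ hp hdag hw) ((hadj w).2 _ hd) Ssub.
  have gam0 : 0 <= \sum_(1 <= i < k.+1) (alpha i)^-1.
    rewrite big_nat_cond; apply: sumr_ge0 => i /andP[/andP[i1 _] _].
    by rewrite invr_ge0 ltW // halpha.
  rewrite eta_ip L2norm_sqr // (L2inner_subl mu _ _ _ hp hdag hd)
    (L2inner_subr mu _ _ _ hp hdag hp) (L2inner_subr mu _ _ _ hp hdag hdag).
  rewrite (L2inner_sym _ udag (P k)) in VI1 VI2 *.
  set G := \sum_(1 <= i < k.+1) (alpha i)^-1 * ip _ _ in E1 *.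
  set g := \sum_(1 <= i < k.+1) (alpha i)^-1 in E1 gam0.
  have : g * ip (z - S udag) (S (P k) - S udag) <= 0 by rewrite mulr_ge0_le0.
  lra.
pose c k := L2norm mu (fun x => P k x - udag x) ^+ 2.
have F3 : forall k, (1 <= k)%N ->
    `|eta k| ^+ 2 + 2 * (alpha k)^-1 * c k <=
    `|eta k.-1| ^+ 2 + 2 * Cb * ((alpha k)^-1 * eps k) * `|eta k|.
  case=> [//|k] _.
  have hk : (1 <= k.+1)%N by [].
  set ai := (alpha k.+1)^-1.
  have ai0 : 0 < ai by rewrite invr_gt0 halpha.
  set e := S udag - S (uin k.+1).
  have erec : eta k = eta k.+1 + (- ai) *: e.
    rewrite /eta [in RHS]big_nat_recr // scaleNr.
    have gen : forall (V : zmodType) (A B W : V), A - W = A + B - W - B.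
      by move=> V A B W; rewrite addrAC addrK.
    have := gen _ (\sum_(1 <= i < k.+1) (alpha i)^-1 *: (S udag - S (uin i))) ((alpha k.+1)^-1 *: (S udag - S (uin k.+1))) w.
    move=> hh. exact hh.
  rewrite /= erec (@norm_sq_addZ _ _ ip hip).
  have he : ip (eta k.+1) e = - ip (eta k.+1) (S (P k.+1) - S udag)
                           + ip (eta k.+1) (S (P k.+1) - S (uin k.+1)).
    rewrite -ipoppr opprB -ipaddr; congr ip.
    by rewrite /e addrA subrK.
  have hCS := @ip_CS _ _ ip hip (eta k.+1) (S (P k.+1) - S (uin k.+1)).
  have hSn : `|S (P k.+1) - S (uin k.+1)| <= Cb * eps k.+1.
    rewrite distrC -Ssub; [|exact: huk|exact: hP].
    apply: (le_trans (HCb _ (inL2_sub mu (huk _ hk) (hP _ hk)))).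
    by apply: ler_wpM2l; [exact: normr_ge0 | case: (HP _ hk)].
  have hF2 := F2 _ hk.
  have n0 : 0 <= `|eta k.+1| by [].
  have hCS2 : ip (eta k.+1) (S (P k.+1) - S (uin k.+1)) <= `|eta k.+1| * (Cb * eps k.+1).
    by apply: (le_trans hCS); apply: ler_wpM2l.
  have e2 : 0 <= (- ai) ^+ 2 * `|e| ^+ 2 by rewrite mulr_ge0 // sqr_ge0.
  rewrite he.
  have m1 := ler_wpM2l (ltW ai0) hCS2.
  have m2 := ler_wpM2l (ltW ai0) hF2.
  rewrite /c; set cc := L2norm _ _ ^+ 2 in m2 *.
  set I1 := ip _ (S (P k.+1) - S udag) in m2 *.
  set I2 := ip _ (S (P k.+1) - S (uin k.+1)) in m1 *.
  set nE := `|eta k.+1| in m1 *.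
  lra.
have ai_ge0 : forall k, (1 <= k)%N -> 0 <= (alpha k)^-1.
  by move=> k hk; rewrite invr_ge0 ltW // halpha.
have gam_ge0 : forall k, 0 <= gammaseq alpha k.
  move=> k; rewrite /gammaseq big_nat_cond; apply: sumr_ge0 => i /andP[/andP[i1 _] _].
  exact: ai_ge0.
have RtermE : forall i, (1 <= i)%N ->
   [/\ 0 <= Rterm alpha eps i, (alpha i)^-1 * eps i <= Rterm alpha eps i
     & eps i ^+ 2 / alpha i <= Rterm alpha eps i].
  move=> i hi; have a0 := halpha i hi; have e0 := heps i hi.
  have g0 := gam_ge0 i.-1.
  have t1 : 0 <= eps i / alpha i by rewrite divr_ge0 // ltW.
  have t2 : 0 <= eps i ^+ 2 / alpha i ^+ 2 by rewrite divr_ge0 // sqr_ge0.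
  have t3 : 0 <= gammaseq alpha i.-1 * eps i / alpha i by rewrite divr_ge0 ?mulr_ge0 // ltW.
  have t4 : 0 <= eps i ^+ 2 / alpha i by rewrite divr_ge0 ?sqr_ge0 // ltW.
  rewrite /Rterm mulrC; split; lra.
pose sR := [sequence \sum_(1 <= i < N.+1) Rterm alpha eps i]_N.
have sR_nd : nondecreasing_seq sR.
  apply/nondecreasing_seqP => n; rewrite /sR /= [leRHS]big_nat_recr //=.
  by rewrite lerDl; case: (RtermE n.+1 isT).
set L := limn sR.
have sR_le : forall n, sR n <= L by exact: nondecreasing_cvgn_le.
have ER_le : forall n, \sum_(1 <= i < n.+1) (alpha i)^-1 * eps i <= L.
  move=> n; apply: le_trans (sR_le n); rewrite /sR /=.
  rewrite big_nat_cond [leRHS]big_nat_cond; apply: ler_sum => i /andP[/andP[i1 _] _].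
  by case: (RtermE i i1).
have ER_ge0 : forall k, (1 <= k)%N -> 0 <= (alpha k)^-1 * eps k.
  by move=> k hk; rewrite mulr_ge0 ?ai_ge0 // ltW // heps.
have Cb0 : 0 <= Cb by exact: normr_ge0.
have c_ge0 : forall k, 0 <= c k by move=> k; exact: sqr_ge0.
have L0 : 0 <= L by apply: le_trans (ER_le 0%N); rewrite big_geq.
have F4 : forall k, `|eta k| <= `|eta 0%N| + 2 * Cb * \sum_(1 <= i < k.+1) (alpha i)^-1 * eps i.
  elim=> [|k IH]; first by rewrite big_geq // mulr0 addr0.
  have h3 := F3 k.+1 isT; rewrite /= in h3.
  have hb := ER_ge0 k.+1 isT.
  have hc : 0 <= 2 * (alpha k.+1)^-1 * c k.+1.
    by apply: mulr_ge0; [apply: mulr_ge0; [exact: ler0n | exact: ai_ge0] | exact: c_ge0].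
  have n1 : 0 <= `|eta k.+1| by []. have n0 : 0 <= `|eta k| by [].
  have : `|eta k.+1| <= `|eta k| + 2 * Cb * ((alpha k.+1)^-1 * eps k.+1).
    set a := `|eta k.+1| in h3 n1 *; set a' := `|eta k| in h3 n0 *.
    set b := 2 * Cb * _ in h3 *.
    have b0 : 0 <= b by rewrite /b; apply: mulr_ge0 => //; apply: mulr_ge0 => //; exact: ler0n.
    nra.
  move=> h; apply: (le_trans h); rewrite big_nat_recr //= mulrDr addrA lerD2r //.
set A := `|eta 0%N| + 2 * Cb * L.
have a_le : forall k, `|eta k| <= A.
  move=> k; apply: (le_trans (F4 k)); rewrite lerD2l; apply: ler_wpM2l => //.
  by rewrite mulr_ge0.
have A0 : 0 <= A by apply: le_trans (a_le 0%N).
have F5 : forall N, 2 * \sum_(1 <= k < N.+1) (alpha k)^-1 * c k + `|eta N| ^+ 2 <=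
    `|eta 0%N| ^+ 2 + 2 * Cb * A * \sum_(1 <= k < N.+1) (alpha k)^-1 * eps k.
  elim=> [|N IH]; first by rewrite !big_geq // !mulr0 add0r addr0.
  have h3 := F3 N.+1 isT; rewrite /= in h3.
  have hb := ER_ge0 N.+1 isT.
  have hA : 2 * Cb * ((alpha N.+1)^-1 * eps N.+1) * `|eta N.+1| <=
            2 * Cb * ((alpha N.+1)^-1 * eps N.+1) * A.
    apply: ler_wpM2l => //; apply: mulr_ge0 => //; apply: mulr_ge0 => //; exact: ler0n.
  rewrite !(big_nat_recr N.+1 1%N) //=.
  set S1 := \sum_(1 <= k < N.+1) _ in IH *.
  set S2 := \sum_(1 <= k < N.+1) _ in IH *.
  lra.
set B := M * ((`|eta 0%N| ^+ 2 + 2 * Cb * A * L) / 2).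
have M0 : 0 <= M by apply: le_trans (HM 1%N isT); exact: ltW (halpha 1%N isT).
have csum : forall N, \sum_(1 <= k < N.+1) c k <= B.
  move=> N.
  have h5 := F5 N.
  have hs : \sum_(1 <= k < N.+1) c k <= M * \sum_(1 <= k < N.+1) (alpha k)^-1 * c k.
    rewrite mulr_sumr big_nat_cond [leRHS]big_nat_cond; apply: ler_sum => i /andP[/andP[i1 _] _].
    have a0 := halpha i i1; have aM := HM i i1.
    rewrite mulrA; rewrite -[X in X <= _]mul1r; apply: ler_wpM2r => //.
    by rewrite -(divff (lt0r_neq0 a0)) ler_wpM2r // invr_ge0 ltW.
  apply: (le_trans hs); rewrite /B; apply: ler_wpM2l => //.
  have hE := ER_le N.
  have hCA : 0 <= 2 * Cb * A by rewrite !mulr_ge0 ?ler0n.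
  have := ler_wpM2l hCA hE.
  have := sqr_ge0 `|eta N|.
  set S1 := \sum_(1 <= k < N.+1) _ in h5 *.
  set S2 := \sum_(1 <= k < N.+1) _ in h5 *.
  lra.
have c0 : c @ \oo --> 0.
  rewrite -cvg_shiftS.
  apply: (@cvg_series_cvg_0 _ _ (fun n => c n.+1)).
  apply: nondecreasing_is_cvgn.
    apply/nondecreasing_seqP => n; rewrite /series /= big_nat_recr //= lerDl.
    exact: c_ge0.
  exists B => _ [n _ <-]; rewrite /series /=.
  have := csum n; rewrite (big_add1 _ _ 0%N n.+1) /=.
  by [].
have R0 : Rterm alpha eps @ \oo --> 0.
  have h2 : sR @ \oo --> L := Hcvg.
  have h1 : (fun n => sR n.+1) @ \oo --> L by have := h2; rewrite -cvg_shiftS.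
  have h3 : ((fun n => sR n.+1) - sR) @ \oo --> L - L := cvgB h1 h2.
  rewrite subrr in h3.
  have e : ((fun n => sR n.+1) - sR) = [sequence Rterm alpha eps n.+1]_n.
    apply/funext => n; rewrite /sR /=.
    rewrite (_ : ((fun n0 : nat => \sum_(1 <= i < n0.+2) Rterm alpha eps i) - (fun N : nat => \sum_(1 <= i < N.+1) Rterm alpha eps i)) n = \sum_(1 <= i < n.+2) Rterm alpha eps i - \sum_(1 <= i < n.+1) Rterm alpha eps i) //.
    by rewrite (big_nat_recr n.+1 1%N) //= addrC addrK.
  by rewrite e cvg_shiftS in h3; apply: h3.
pose y k := 2 * M * Rterm alpha eps k + 2 * c k.
have y0 : y @ \oo --> 0.
  rewrite -(addr0 0); apply: cvgD.
    rewrite -(mulr0 (2 * M)); exact: cvgMr.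
  rewrite -(mulr0 2); exact: cvgMr.
have xy : forall k, (1 <= k)%N -> L2norm mu (fun x => uin k x - udag x) ^+ 2 <= y k.
  move=> k hk.
  have hp := hP k hk; have hu := huk k hk.
  have ha := inL2_sub mu hu hp; have hb := inL2_sub mu hp hdag.
  have E1 := L2norm_sq_expand mu (-1) ha hb.
  have E2 := L2norm_sq_expand mu 1 ha hb.
  rewrite (_ : (fun x => uin k x - P k x - -1 * (P k x - udag x)) = (fun x => uin k x - udag x)) in E1; last first.
    by apply/funext => x; ring.
  have n2 := sqr_ge0 (L2norm mu (fun x => uin k x - P k x - 1 * (P k x - udag x))).
  rewrite E2 in n2.
  have [_ hpe] := HP k hk.
  have hn0 := L2norm_ge0 mu (fun x => uin k x - P k x).
  have hpe2 : L2norm mu (fun x => uin k x - P k x) ^+ 2 <= eps k ^+ 2.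
    by rewrite ler_sqr ?nnegrE // ltW // heps.
  have [_ _ hR] := RtermE k hk.
  have he2 : eps k ^+ 2 <= M * Rterm alpha eps k.
    have a0 := halpha k hk.
    apply: (le_trans _ (ler_wpM2l M0 hR)).
    have q0 : 0 <= eps k ^+ 2 / alpha k by rewrite divr_ge0 ?sqr_ge0 // ltW.
    apply: (@le_trans _ _ (alpha k * (eps k ^+ 2 / alpha k))).
      by rewrite mulrCA divff ?mulr1 // lt0r_neq0.
    by rewrite ler_wpM2r // HM.
  rewrite E1 /y; rewrite /c.
  set I := L2inner _ _ _ in E1 n2 *.
  lra.
apply/cvgr0Pnorm_lt => e e0.
have e20 : 0 < e ^+ 2 by rewrite exprn_gt0.
have Hn := @cvgr0_norm_lt _ _ _ _ _ y y0 _ e20.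
near=> t.
have t1 : (1 <= t)%N by near: t; exact: nbhs_infty_ge.
have Ht : `|y t| < e ^+ 2 by near: t; exact: Hn.
have hx := xy t t1.
have x0 := L2norm_ge0 mu (fun x => uin t x - udag x).
rewrite ger0_norm //.
have : y t < e ^+ 2 by apply: le_lt_trans (ler_norm _) Ht.
set X := L2norm _ _ in hx x0 *.
nra.
Unshelve. all: by end_near.
Qed.
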